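(* Let $a\ge b\ge2$ and $k$ be integers with $2a+3\le k\le2a+2b-1$. Then for every $(i,j)\in\overline{Q}_1$: - $w_1,w_3,w_5\in\mathcal{R}^k_{(a,b),(i,j)}$; - if $b\ge\lceil(a+3)/2\rceil$ and $k=a+2b$, then $w_4\in\mathcal{R}^k_{(a,b),(i,j)}$; - if $b\ge\lceil a/2\rceil+2$ and $2a+3\le k\le a+2b-1$, then $w_6\in\mathcal{R}^k_{(a,b),(i,j)}$.
   Context: $\widehat{\mathfrak{su}}(3)_k$ fusion. Let $P_+^k=\{(\lambda_1,\lambda_2)\in\mathbb{Z}_{\ge0}^2:\lambda_1+\lambda_2\le k\}$. For $\lambda,\mu,\nu\in P_+^k$ set - $\mathcal{A}=\tfrac13[2(\lambda_1+\mu_1+\nu_2)+\lambda_2+\mu_2+\nu_1]$, - $\mathcal{B}=\tfrac13[\lambda_1+\mu_1+\nu_2+2(\lambda_2+\mu_2+\nu_1)]$, - $k_0^{\max}=\min(\mathcal{A},\mathcal{B})$, - $k_0^{\min}=\max(\lambda_1+\lambda_2,\mu_1+\mu_2,\nu_1+\nu_2,\mathcal{A}-\lambda_1,\mathcal{A}-\mu_1,\mathcal{A}-\nu_2,\mathcal{B}-\lambda_2,\mathcal{B}-\mu_2,\mathcal{B}-\nu_1)$. The fusion multiplicity is $N^{(k)\nu}_{\lambda,\mu}=\min(k_0^{\max},k)-k_0^{\min}+1$ if $\mathcal{A},\mathcal{B}$ are nonnegative integers, $k_0^{\max}\ge k_0^{\min}$ and $k\ge k_0^{\min}$; otherwise it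 is $0$. The set $\mathcal{R}^k_{\lambda,\mu}$ is $\{\nu\in P_+^k:N^{(k)\nu}_{\lambda,\mu}\ne0\}$. The candidate weights are $w_1=(a-1,b+2)$, $w_2=(a+2,b-1)$, $w_3=(a+1,b-2)$, $w_4=(a-2,b+1)$, $w_5=(a+1,b+1)$, $w_6=(a-1,b-1)$. The set $\overline{Q}_1$ is defined by $\overline{Q}_1=\{(3p-k,2k-3p):p\in\mathbb{Z},\ \lceil(k+1)/2\rceil\le p\le\min(a+b,k-a-1,\lfloor2k/3\rfloor,\lfloor(b+k)/2\rfloor)\}$. *)

(* Defs.v *)
From mathcomp Require Import all_boot all_order all_algebra.
Set Implicit Arguments. Unset Strict Implicit. Unset Printing Implicit Defensive.
Import Order.TTheory GRing.Theory Num.Theory.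
Local Open Scope ring_scope.

(* Weights of su(3) are pairs of integers (lambda_1, lambda_2). *)
Definition weight := (int * int)%type.

(* floor(x/d) and ceil(x/d) for d > 0 (divz is floor division for d > 0). *)
Definition floorq (x d : int) : int := (x %/ d)%Z.
Definition ceilq (x d : int) : int := - ((- x) %/ d)%Z.

Definition in_Pplus (k : int) (l : weight) : bool :=
  (0 <= l.1) && (0 <= l.2) && (l.1 + l.2 <= k).

Definition numA (l m n : weight) : int :=
  2 * (l.1 + m.1 + n.2) + l.2 + m.2 + n.1.
Definition numB (l m n : weight) : int :=
  l.1 + m.1 + n.2 + 2 * (l.2 + m.2 + n.1).

Definition AB_nat (l m n : weight) : bool :=
  (3 %| numA l m n)%Z && (3 %| numB l m n)%Z &&
  (0 <= numA l m n) && (0 <= numB l m n).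

Definition cA (l m n : weight) : int := (numA l m n %/ 3)%Z.
Definition cB (l m n : weight) : int := (numB l m n %/ 3)%Z.

Definition k0max (l m n : weight) : int := Num.min (cA l m n) (cB l m n).
Definition k0min (l m n : weight) : int :=
  let A := cA l m n in let B := cB l m n in
  Num.max (l.1 + l.2) (Num.max (m.1 + m.2) (Num.max (n.1 + n.2)
  (Num.max (A - l.1) (Num.max (A - m.1) (Num.max (A - n.2)
  (Num.max (B - l.2) (Num.max (B - m.2) (B - n.1)))))))).

Definition fusionN (k : int) (l m n : weight) : int :=
  if AB_nat l m n && (k0min l m n <= k0max l m n) && (k0min l m n <= k)
  then Num.min (k0max l m n) k - k0min l m n + 1
  else 0.

Definition inR (k : int) (l m n : weight) : Prop :=
  in_Pplus k n /\ fusionN k l m n != 0.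

Definition w1 (a b : int) : weight := (a - 1, b + 2).
Definition w2 (a b : int) : weight := (a + 2, b - 1).
Definition w3 (a b : int) : weight := (a + 1, b - 2).
Definition w4 (a b : int) : weight := (a - 2, b + 1).
Definition w5 (a b : int) : weight := (a + 1, b + 1).
Definition w6 (a b : int) : weight := (a - 1, b - 1).

Definition inQ1bar (a b k : int) (ij : weight) : Prop :=
  exists p : int,
    ceilq (k + 1) 2 <= p /\
    p <= Num.min (a + b) (Num.min (k - a - 1)
           (Num.min (floorq (2 * k) 3) (floorq (b + k) 2))) /\
    ij = (3 * p - k, 2 * k - 3 * p).

(* Main.v *)
Require Import Defs.
From mathcomp Require Import all_boot all_order all_algebra zify.
Import Order.TTheory GRing.Theory Num.Theory.
Local Open Scope ring_scope.

Lemma key (k : int) (l m n : weight) (A B : int) :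
  numA l m n = 3 * A -> numB l m n = 3 * B -> 0 <= A -> 0 <= B ->
  Num.max (l.1 + l.2) (Num.max (m.1 + m.2) (Num.max (n.1 + n.2)
  (Num.max (A - l.1) (Num.max (A - m.1) (Num.max (A - n.2)
  (Num.max (B - l.2) (Num.max (B - m.2) (B - n.1)))))))) <= Num.min (Num.min A B) k ->
  fusionN k l m n != 0.
Proof.
move=> hA hB A0 B0 H.
rewrite /fusionN /AB_nat /k0min /k0max /cA /cB hA hB !mulKz //.
have -> : (3 %| 3 * A)%Z by apply: dvdz_mulr.
have -> : (3 %| 3 * B)%Z by apply: dvdz_mulr.
set M := Num.max _ _ in H *.
clearbody M.
move: H; rewrite !le_min => /andP[/andP[HA HB] Hk].
rewrite ifT; last by rewrite HA HB Hk /=; apply/andP; split; lia.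
apply/eqP => E.
have : M <= Num.min (Num.min A B) k by rewrite !le_min HA HB Hk.
lia.
Qed.

Ltac fin := rewrite /= !ge_max !le_min /=; repeat (apply/andP; split); lia.

Theorem mainTheorem8 (a b k : int) :
  2 <= b -> b <= a -> 2 * a + 3 <= k -> k <= 2 * a + 2 * b - 1 ->
  forall ij : weight, inQ1bar a b k ij ->
    (inR k (a, b) ij (w1 a b) /\ inR k (a, b) ij (w3 a b) /\
     inR k (a, b) ij (w5 a b)) /\
    (ceilq (a + 3) 2 <= b -> k = a + 2 * b -> inR k (a, b) ij (w4 a b)) /\
    (ceilq a 2 + 2 <= b -> 2 * a + 3 <= k -> k <= a + 2 * b - 1 ->
       inR k (a, b) ij (w6 a b)).
Proof.
move=> h1 h2 h3 h4 ij [p [hp1 [hp2 ->]]].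
move: hp1 hp2; rewrite /ceilq /floorq !le_min => hp1 /and4P[q1 q2 q3 q4].
have P1 : k + 1 <= 2 * p by lia.
have P4 : 3 * p <= 2 * k by lia.
have P5 : 2 * p <= b + k by lia.
clear hp1 q3 q4.
rewrite /inR /in_Pplus /w1 /w3 /w4 /w5 /w6 /=.
split; [split; [|split]|split].
- split; first by repeat (apply/andP; split); lia.
  apply: (@key k _ _ _ (a + b + p + 1) (a + b + k - p)); rewrite /numA /numB /=; try lia; fin.
- split; first by repeat (apply/andP; split); lia.
  apply: (@key k _ _ _ (a + b + p - 1) (a + b + k - p)); rewrite /numA /numB /=; try lia; fin.
- split; first by repeat (apply/andP; split); lia.
  apply: (@key k _ _ _ (a + b + p + 1) (a + b + k - p + 1)); rewrite /numA /numB /=; try lia; fin.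
- move=> h5 h6.
  have P6 : a + 3 <= 2 * b by lia.
  clear h5.
  split; first by repeat (apply/andP; split); lia.
  apply: (@key k _ _ _ (a + b + p) (a + b + k - p - 1)); rewrite /numA /numB /=; try lia; fin.
- move=> h5 h6 h7.
  have P6 : a + 4 <= 2 * b by lia.
  clear h5.
  split; first by repeat (apply/andP; split); lia.
  apply: (@key k _ _ _ (a + b + p - 1) (a + b + k - p - 1)); rewrite /numA /numB /=; try lia; fin.
Qed.
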